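(* Let $n\ge2$, $q_1,q_2\in\mathbb{C}$ with $q_1q_2\ne0$ and $q=-q_2/q_1$ not a root of unity. Let $G=\rho(B_n)\subseteq\mathrm{GL}(\mathbf{F})$ be the image of the reduced Burau representation and $\overline{G}$ its Zariski closure in $\mathrm{GL}(\mathbf{F})$. Suppose $q_1^{n-2}q_2$ is not a root of unity. Then for every $g\in G$ and every nonzero $z\in\mathbb{C}$, $zg\in\overline{G}$.
   Context: Artin's braid group $B_n$ has generators $\sigma_1,\dots,\sigma_{n-1}$ with the braid relations. $\mathbf{E}=\mathbb{C}^n$ with basis $e_1,\dots,e_n$ carries the generalized Burau representation $\sigma_ie_j=q_1e_j$ ($j\ne i,i+1$), $\sigma_ie_{i+1}=-q_2e_i$, $\sigma_ie_i=(q_1+q_2)e_i+q_1e_{i+1}$; $\mathbf{F}=\mathrm{span}\{q_2e_i+q_1e_{i+1}:1\le i\le n-1\}$ is an $(n-1)$-dimensional $B_n$-submodule and $\rho:B_n\to\mathrm{GL}(\mathbf{F})$ is the resulting action. *)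

(* Defs.v *)
From HB Require Import structures.
From mathcomp Require Import all_boot all_order all_algebra.
From mathcomp Require Import reals.
From mathcomp.real_closed Require Import complex.
From mathcomp Require Import mpoly.

Set Implicit Arguments.
Unset Strict Implicit.
Unset Printing Implicit Defensive.
Import Order.TTheory GRing.Theory Num.Theory.
Local Open Scope ring_scope.

Section Burau.
Variable C : comUnitRingType.

Definition not_root_of_unity (x : C) : Prop :=
  forall k : nat, (0 < k)%N -> x ^+ k != 1.

(* Matrix (column convention: column c is sigma_{i+1} e_c) of the generalized
   Burau generator sigma_{i+1} on E = C^n, for i : 'I_n.-1 (0-indexed). *)
Definition burau_sigma (n : nat) (q1 q2 : C) (i : 'I_n.-1) : 'M[C]_n :=
  \matrix_(r < n, c < n)
    if (c == i :> nat) then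
      (if (r == i :> nat) then q1 + q2 else if (r == i.+1 :> nat) then q1 else 0)
    else if (c == i.+1 :> nat) then
      (if (r == i :> nat) then - q2 else 0)
    else if (r == c :> nat) then q1 else 0.

(* Columns f_c = q2 e_c + q1 e_{c+1}, c < n-1: a basis of the submodule F. *)
Definition burau_Fbasis (n : nat) (q1 q2 : C) : 'M[C]_(n, n.-1) :=
  \matrix_(r < n, c < n.-1)
    if (r == c :> nat) then q2 else if (r == c.+1 :> nat) then q1 else 0.

(* Image of a word in the generators sigma_i^{+-1} (true = sigma_i^{-1}). *)
Definition burau_word (n : nat) (q1 q2 : C) (w : seq ('I_n.-1 * bool)) : 'M[C]_n :=
  foldr (fun a M =>
           (if a.2 then invmx (burau_sigma q1 q2 a.1) else burau_sigma q1 q2 a.1) *m M)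
        1%:M w.

(* G = rho(B_n) as matrices in the basis f_1..f_{n-1} of F: the matrices R
   with W *m Fbasis = Fbasis *m R for W the image of some braid word. *)
Definition reduced_burau_image (n : nat) (q1 q2 : C) : 'M[C]_n.-1 -> Prop :=
  fun R => exists w : seq ('I_n.-1 * bool),
      burau_word q1 q2 w *m burau_Fbasis n q1 q2 = burau_Fbasis n q1 q2 *m R.

(* Coordinates of GL_m: the m*m entries and 1/det. *)
Definition gl_coord (m : nat) (g : 'M[C]_m) (k : 'I_(m * m + 1)) : C :=
  match split k with
  | inl k' => mxvec g 0 k'
  | inr _ => (\det g)^-1
  end.

(* Zariski closure in GL_m of a set S: invertible g on which every regular
   function of GL_m (polynomial in entries and 1/det) vanishing on S
   (intersected with GL_m) vanishes. *)
Definition zariski_closure_GL (m : nat) (S : 'M[C]_m -> Prop) : 'M[C]_m -> Prop :=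
  fun g => g \in unitmx /\
    forall p : {mpoly C[m * m + 1]},
      (forall h, S h -> h \in unitmx -> p.@[gl_coord h] = 0) ->
      p.@[gl_coord g] = 0.

End Burau.
Arguments reduced_burau_image {C} n q1 q2 _.
Arguments burau_Fbasis {C} n q1 q2.
Arguments burau_sigma {C} n q1 q2 i.

(* Main.v *)
Require Import Defs.
From HB Require Import structures.
From mathcomp Require Import all_boot all_order all_algebra.
From mathcomp Require Import reals.
From mathcomp.real_closed Require Import complex.
From mathcomp Require Import mpoly.
From mathcomp Require Import ring zify.
From Stdlib Require Import FunctionalExtensionality.
Set Implicit Arguments.
Unset Strict Implicit.
Unset Printing Implicit Defensive.
Import Order.TTheory GRing.Theory Num.Theory.
Local Open Scope ring_scope.
Section Act.
Variable F : fieldType.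
Variables q1 q2 : F.
Variable N : nat.

Lemma sum_delta (n : nat) (G : 'I_n.+1 -> F) (j : nat) :
  \sum_(c < n.+1) (if (c : nat) == j then G c else 0) =
  if (j < n.+1)%N then G (inord j) else 0.
Proof.
case: ltnP => hj.
  rewrite (bigD1 (inord j)) //= inordK // eqxx big1 ?addr0 // => c hc.
  case: eqP => // e; move: hc; rewrite -val_eqE /= inordK // e eqxx //.
rewrite big1 // => c _; case: eqP => // e; have := ltn_ord c.
by rewrite e ltnNge hj.
Qed.

Definition sf (i : nat) (f : nat -> F) : nat -> F := fun r =>
  if r == i then (q1 + q2) * f i - q2 * f i.+1
  else if r == i.+1 then q1 * f i else q1 * f r.

Definition fv (v : 'cV[F]_(N.+1)) : nat -> F := fun r =>
  if (r < N.+1)%N then v (inord r) 0 else 0.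

Lemma sigma_pt (c r i : nat) (x : F) :
  (if c == i then (if r == i then q1 + q2 else if r == i.+1 then q1 else 0)
   else if c == i.+1 then (if r == i then - q2 else 0)
   else if r == c then q1 else 0) * x =
  (if c == i then (if r == i then q1 + q2 else if r == i.+1 then q1 else 0) * x else 0)
  + (if c == i.+1 then (if r == i then - q2 else 0) * x else 0)
  + (if c == r then (if (r != i) && (r != i.+1) then q1 else 0) * x else 0).
Proof.
have [->|ci] := eqVneq c i.
  have -> : (i == i.+1) = false by lia.
  case: (i =P r) => [<-|ir]; first by rewrite eqxx /= !mul0r !addr0.
  by rewrite addr0 addr0.
have [->|ci1] := eqVneq c i.+1.
  rewrite ?add0r.
  idtac.
  case: (i.+1 =P r) => [<-|ir]; first by rewrite eqxx /= andbF !mul0r !addr0.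
  by rewrite addr0.
rewrite !add0r.
case: (c =P r) => [<-|cr]; first by rewrite eqxx ci ci1.
have -> : (r == c) = false by apply/eqP => e; apply: cr.
by rewrite mul0r.
Qed.


Lemma sigma_act (i : 'I_N) (v : 'cV[F]_(N.+1)) :
  fv (burau_sigma N.+1 q1 q2 i *m v) = sf i (fv v).
Proof.
apply: functional_extensionality => r.
rewrite /fv /sf; case: (ltnP r N.+1) => hr.
  rewrite mxE.
  under eq_bigr => c _ do rewrite mxE inordK // sigma_pt.
  rewrite !big_split /= !sum_delta.
  have hi : (i < N.+1)%N by apply: ltnW (ltn_ord i).
  have hi1 : (i.+1 < N.+1)%N by rewrite ltnS (ltn_ord i).
  rewrite hi hi1 hr.
  case: (r =P i) => [->|ri] /=.
    by rewrite ?mul0r ?addr0 mulNr.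
  case: (r =P i.+1) => [->|ri1] /=.
    by rewrite ?mul0r ?addr0.
  by rewrite ?mul0r ?add0r.
case: (r =P i) => [e|_]; first by move: (ltn_ord i); lia.
case: (r =P i.+1) => [e|_]; first by move: (ltn_ord i); lia.
by rewrite mulr0.
Qed.


Fixpoint yf (f : nat -> F) (d : nat) : F :=
  match d with
  | 0 => f N
  | d'.+1 => (q1 + q2) * q1 ^+ d' * f (N - d)%N - q2 * yf f d'
  end.

Definition Zf (f : nat -> F) := forall r, (N < r)%N -> f r = 0.

Lemma T_form (f : nat -> F) : Zf f -> forall d k, (k + d = N)%N ->
  forall r, foldr sf f (iota k d) r =
   if (r < k)%N then q1 ^+ d * f r else if r == k then yf f d
   else if (r <= N)%N then q1 ^+ d * f r.-1 else 0.
Proof.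
move=> zf; elim=> [|d IH] k hk r /=.
  rewrite addn0 in hk; subst k.
  case: ltnP => h1; first by rewrite expr0 mul1r.
  case: (r =P N) => [->//|rN].
  case: leqP => h2; first by exfalso; lia.
  by rewrite zf.
have hk1 : (k.+1 + d = N)%N by lia.
rewrite /sf !IH //.
have -> : (N - d.+1 = k)%N by lia.
case: (ltngtP r k) => h1.
- have -> : (r < k.+1)%N by lia.
  case: (r =P k.+1) => [e|_]; first by lia.
  by rewrite exprS mulrA.
- have -> : (r < k.+1)%N = false by apply/negbTE; lia.
  case: (r =P k.+1) => [->|h2].
    have -> : (k.+1 <= N)%N by lia.
    by rewrite ltnSn exprS mulrA.
  case: leqP => h3; first by rewrite exprS mulrA.
  by rewrite mulr0.
- subst r; rewrite eqxx ltnSn ltnn /=.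
  by rewrite mulrA.
Qed.


Definition q := - q2 / q1.

Lemma q2E : q1 != 0 -> q2 = - (q * q1).
Proof. by move=> h; rewrite /q divfK // opprK. Qed.

Lemma yf_closed (f : nat -> F) : q1 != 0 -> forall d k, (k + d = N)%N ->
  yf f d * q ^+ k =
  q1 ^+ d * (q ^+ N * f N + (1 - q) * \sum_(k <= c < N) q ^+ c * f c).
Proof.
move=> hq1; elim=> [|d IH] k hk /=.
  rewrite addn0 in hk; subst k.
  by rewrite big_geq // mulr0 addr0 expr0 mul1r mulrC.
have hk1 : (k.+1 + d = N)%N by lia.
have e := IH _ hk1.
rewrite (_ : (N - d.+1)%N = k); last by lia.
rewrite big_ltn; last by lia.
move: e; set Y := yf f d; set S := \sum_(k.+1 <= c < N) _ => e.
rewrite (q2E hq1).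
have -> : ((q1 + - (q * q1)) * q1 ^+ d * f k - - (q * q1) * Y) * q ^+ k
   = q1 ^+ d.+1 * (1 - q) * q ^+ k * f k + q1 * (Y * q ^+ k.+1).
  by rewrite !exprS; ring.
by rewrite e !exprS; ring.
Qed.


Definition Dl (f : nat -> F) := foldr sf f (iota 0 N).
Definition Tw (f : nat -> F) : nat -> F := fun r =>
  if r == 0%N then q ^+ N.+1 * f N else if (r <= N)%N then f r.-1 else 0.
Definition Ff (f : nat -> F) := \sum_(c < N.+1) q ^+ c * f c = 0.

Lemma Dl_Tw (f : nat -> F) : q1 != 0 -> Zf f -> Ff f ->
  Dl f = fun r => q1 ^+ N * Tw f r.
Proof.
move=> hq1 zf ff; apply: functional_extensionality => r.
rewrite /Dl (T_form zf (k:=0) (d:=N)) // /Tw ltn0.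
case: r => [|r] /=; last first.
  by case: ifP; rewrite ?mulr0.


have := yf_closed f hq1 (d:=N) (k:=0) erefl.
rewrite expr0 mulr1 big_mkord => ->.
move: ff; rewrite /Ff big_ord_recr /= => /(congr1 (fun x => x - q ^+ N * f N)).
rewrite addrK sub0r => ->.
by rewrite exprS; ring.
Qed.

Lemma Tw_Z f : Zf f -> Zf (Tw f).
Proof.
move=> zf r hr; rewrite /Tw.
case: (r =P 0%N) => [e|_]; first by subst; rewrite ltn0 in hr.
by case: leqP => // h; lia.
Qed.

Lemma Tw_F f : Zf f -> Ff f -> Ff (Tw f).
Proof.
move=> zf ff; rewrite /Ff big_ord_recl /=.
have e : \sum_(i < N) q ^+ (lift ord0 i) * Tw f (lift ord0 i)
   = q * \sum_(i < N) q ^+ i * f i.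
  rewrite mulr_sumr; apply: eq_bigr => i _.
  rewrite /Tw /= ltn_ord /= exprS; ring.
rewrite e.
move: ff; rewrite /Ff big_ord_recr /= => ff.
have -> : \sum_(i < N) q ^+ i * f i = - (q ^+ N * f N).
  by apply/eqP; rewrite -subr_eq0 opprK; apply/eqP.
rewrite /Tw /= exprS; ring.
Qed.


Lemma iterTw f : Zf f -> forall k, (k <= N.+1)%N -> forall r,
  iter k Tw f r = if (r < k)%N then q ^+ N.+1 * f (N.+1 - k + r)%N
                  else if (r <= N)%N then f (r - k)%N else 0.
Proof.
move=> zf; elim=> [|k IH] hk r.
  rewrite ltn0 subn0 /=; case: leqP => // h; by rewrite zf.
rewrite iterS {1}/Tw.
have hkN : (k <= N)%N by lia.
case: r => [|r] /=.
  rewrite IH; last by lia.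
  rewrite ltnNge hkN leqnn /=.
  by rewrite (_ : (N - k = N.+1 - k.+1 + 0)%N) //; lia.
rewrite ltnS.
case: (ltnP r N) => h1.
  rewrite IH; last by lia.
  case: (ltnP r k) => h2.
    by rewrite (_ : (N.+1 - k + r = N.+1 - k.+1 + r.+1)%N) //; lia.
  by rewrite (_ : (r <= N)%N) //; lia.
case: (ltnP r k) => h2 //; lia.
Qed.

Lemma Tw_full f : Zf f -> iter N.+1 Tw f = fun r => q ^+ N.+1 * f r.
Proof.
move=> zf; apply: functional_extensionality => r.
rewrite iterTw //; case: ltnP => h.
  by rewrite subnn add0n.
by case: leqP => h2; [lia | rewrite zf ?mulr0].
Qed.

Lemma sf_scale a i g : sf i (fun r => a * g r) = fun r => a * sf i g r.
Proof.
apply: functional_extensionality => r; rewrite /sf.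
by case: ifP => _; [ring | case: ifP => _; ring].
Qed.

Lemma fold_scale a g s : foldr sf (fun r => a * g r) s = fun r => a * foldr sf g s r.
Proof. by elim: s => //= i s ->; rewrite sf_scale. Qed.

Lemma Zf_scale a f : Zf f -> Zf (fun r => a * f r).
Proof. by move=> zf r hr; rewrite zf ?mulr0. Qed.

Lemma Ff_scale a f : Ff f -> Ff (fun r => a * f r).
Proof.
rewrite /Ff => ff.
under eq_bigr => i _ do rewrite mulrCA.
by rewrite -mulr_sumr ff mulr0.
Qed.

Lemma iterTw_ZF f k : Zf f -> Ff f -> Zf (iter k Tw f) /\ Ff (iter k Tw f).
Proof.
move=> zf ff; elim: k => [|k [z1 f1]] //=.
by split; [apply: Tw_Z | apply: Tw_F].
Qed.

Lemma iter_Dl f : q1 != 0 -> Zf f -> Ff f -> forall k,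
  iter k Dl f = fun r => (q1 ^+ N) ^+ k * iter k Tw f r.
Proof.
move=> hq1 zf ff; elim=> [|k IH].
  by apply: functional_extensionality => r /=; rewrite mul1r.
rewrite iterS IH /Dl fold_scale -/(Dl _).
have [z1 f1] := iterTw_ZF k zf ff.
rewrite Dl_Tw //.
by apply: functional_extensionality => r /=; rewrite exprS; ring.
Qed.

Definition c0 := (q1 ^+ N * q) ^+ N.+1.

Lemma Dl_full f : q1 != 0 -> Zf f -> Ff f ->
  iter N.+1 Dl f = fun r => c0 * f r.
Proof.
move=> hq1 zf ff; rewrite iter_Dl // Tw_full //.
by apply: functional_extensionality => r; rewrite /c0 mulrA -exprMn.
Qed.


Lemma fv_inj (u v : 'cV[F]_(N.+1)) : fv u = fv v -> u = v.
Proof.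
move=> e; apply/matrixP => r c; rewrite (ord1 c).
have := congr1 (fun f => f (r : nat)) e; rewrite /fv ltn_ord inord_val //.
Qed.

Lemma fv_Z v : Zf (fv v).
Proof. by move=> r hr; rewrite /fv; case: ltnP => // h; lia. Qed.

Lemma fv_scale a v : fv (a *: v) = fun r => a * fv v r.
Proof.
apply: functional_extensionality => r; rewrite /fv.
by case: ifP => _; rewrite ?mxE ?mulr0.
Qed.

Lemma burau_word_cat (u w : seq ('I_N * bool)) :
  @burau_word F N.+1 q1 q2 (u ++ w) =
  @burau_word F N.+1 q1 q2 u *m @burau_word F N.+1 q1 q2 w.
Proof.
elim: u => [|a u IH] /=; first by rewrite mul1mx.
by move: IH; rewrite /burau_word /= => ->; rewrite mulmxA.
Qed.

Lemma burau_word_cons a (w : seq ('I_N * bool)) :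
  @burau_word F N.+1 q1 q2 (a :: w) =
  (if a.2 then invmx (burau_sigma N.+1 q1 q2 a.1) else burau_sigma N.+1 q1 q2 a.1)
    *m @burau_word F N.+1 q1 q2 w.
Proof. by []. Qed.

Lemma word_act (s : seq 'I_N) (v : 'cV[F]_(N.+1)) :
  fv (@burau_word F N.+1 q1 q2 [seq (i, false) | i <- s] *m v) =
  foldr sf (fv v) [seq val i | i <- s].
Proof.
elim: s => [|i s IH]; first by rewrite /= mul1mx.
rewrite map_cons burau_word_cons /= -mulmxA.
by rewrite sigma_act IH.
Qed.

Definition dw : seq ('I_N * bool) := [seq (i, false) | i <- enum 'I_N].

Lemma dw_act v : fv (@burau_word F N.+1 q1 q2 dw *m v) = Dl (fv v).
Proof. by rewrite word_act val_enum_ord. Qed.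

Lemma dwn_act m v :
  fv (@burau_word F N.+1 q1 q2 (flatten (nseq m dw)) *m v) = iter m Dl (fv v).
Proof.
elim: m => [|m IH] /=; first by rewrite /burau_word /= mul1mx.
by rewrite burau_word_cat -mulmxA dw_act IH.
Qed.

Definition wd := flatten (nseq N.+1 dw).

Lemma wd_act v : q1 != 0 -> Ff (fv v) ->
  @burau_word F N.+1 q1 q2 wd *m v = c0 *: v.
Proof.
move=> hq1 ff; apply: fv_inj.
by rewrite dwn_act Dl_full // ?fv_scale //; apply: fv_Z.
Qed.


Lemma Fb_cols (j : 'I_N) : q1 != 0 ->
  Ff (fv (col j (burau_Fbasis N.+1 q1 q2))).
Proof.
move=> hq1; rewrite /Ff.
have e : forall c : 'I_N.+1, q ^+ c * fv (col j (burau_Fbasis N.+1 q1 q2)) c =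
   (if (c : nat) == j then q ^+ c * q2 else 0) +
   (if (c : nat) == j.+1 then q ^+ c * q1 else 0).
  move=> c; rewrite /fv ltn_ord !mxE inord_val.
  case: (c =P j :> nat) => [->|cj].
    by rewrite (_ : (j == j.+1 :> nat) = false) ?addr0 //; apply/eqP; lia.
  by case: ifP => _; rewrite ?mulr0 ?add0r.
rewrite (eq_bigr _ (fun c _ => e c)) big_split /= !sum_delta.
have hj : (j < N.+1)%N by apply: ltnW (ltn_ord j).
have hj1 : (j.+1 < N.+1)%N by rewrite ltnS (ltn_ord j).
rewrite hj hj1 !inordK // (q2E hq1) exprS; ring.
Qed.

Lemma wd_Fb : q1 != 0 ->
  @burau_word F N.+1 q1 q2 wd *m burau_Fbasis N.+1 q1 q2 =
  c0 *: burau_Fbasis N.+1 q1 q2.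
Proof.
move=> hq1; apply/matrixP => r j.
have := wd_act hq1 (Fb_cols j hq1).
move/(congr1 (fun M : 'cV[F]_(N.+1) => M r 0)).
rewrite !mxE => <-.
by apply: eq_bigr => k _; rewrite !mxE.
Qed.


Lemma col_inj_unit n (A : 'M[F]_n) :
  (forall v : 'cV_n, A *m v = 0 -> v = 0) -> A \in unitmx.
Proof.
move=> h; rewrite -unitmx_tr -row_free_unit; apply: inj_row_free => u hu.
apply: trmx_inj; rewrite trmx0; apply: h.
by rewrite -(trmxK (A *m u^T)) trmx_mul trmxK hu trmx0.
Qed.

Lemma fv0 r : fv 0 r = 0.
Proof. by rewrite /fv; case: ifP; rewrite ?mxE. Qed.

Lemma sigma_unit (i : 'I_N) : q1 != 0 -> q2 != 0 ->
  burau_sigma N.+1 q1 q2 i \in unitmx.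
Proof.
move=> h1 h2; apply: col_inj_unit => v hv.
have e : forall r, sf i (fv v) r = 0.
  by move=> r; rewrite -sigma_act hv fv0.
have vi : fv v i = 0.
  have := e i.+1; rewrite /sf (_ : (i.+1 == i :> nat) = false); last by apply/eqP; lia.
  by rewrite eqxx => /eqP; rewrite mulf_eq0 (negbTE h1) /= => /eqP.
have vi1 : fv v i.+1 = 0.
  have := e i; rewrite /sf eqxx vi mulr0 sub0r => /eqP.
  by rewrite oppr_eq0 mulf_eq0 (negbTE h2) /= => /eqP.
apply: fv_inj; apply: functional_extensionality => r.
rewrite fv0.
case: (r =P i) => [->//|ri]; case: (r =P i.+1) => [->//|ri1].
have := e r; rewrite /sf.
case: (r =P i) => [//|_]; case: (r =P i.+1) => [//|_].
by move/eqP; rewrite mulf_eq0 (negbTE h1) /= => /eqP.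
Qed.

Lemma word_unit (w : seq ('I_N * bool)) : q1 != 0 -> q2 != 0 ->
  @burau_word F N.+1 q1 q2 w \in unitmx.
Proof.
move=> h1 h2; elim: w => [|a w IH]; first by rewrite /burau_word /= unitmx1.
rewrite burau_word_cons unitmx_mul IH andbT.
by case: ifP => _; rewrite ?unitmx_inv sigma_unit.
Qed.

Lemma Fb_inj (v : 'cV[F]_N) : q2 != 0 ->
  burau_Fbasis N.+1 q1 q2 *m v = 0 -> v = 0.
Proof.
move=> h2 hv.
have H : forall k (c : 'I_N), (c : nat) = k -> v c 0 = 0.
  elim/ltn_ind => k IH c ck.
  have := congr1 (fun M : 'cV[F]_(N.+1) => M (widen_ord (leqnSn N) c) 0) hv.
  rewrite !mxE (bigD1 c) //= big1.
    by rewrite !mxE eqxx addr0 => /eqP; rewrite mulf_eq0 (negbTE h2) /= => /eqP.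
  move=> c' hc'; rewrite mxE /=.
  have -> : ((c : nat) == c') = false.
    by apply/eqP => e; move/eqP: hc'; apply; apply: val_inj.
  case: ifP => [/eqP e|_]; last by rewrite mul0r.
  by rewrite (IH c') ?mulr0 //; lia.
by apply/matrixP => c j; rewrite (ord1 j) mxE; apply: H.
Qed.

Lemma img_unit (g : 'M[F]_N) (w : seq ('I_N * bool)) : q1 != 0 -> q2 != 0 ->
  @burau_word F N.+1 q1 q2 w *m burau_Fbasis N.+1 q1 q2 =
  burau_Fbasis N.+1 q1 q2 *m g -> g \in unitmx.
Proof.
move=> h1 h2 hw; apply: col_inj_unit => v gv.
apply: (Fb_inj h2).
have e : @burau_word F N.+1 q1 q2 w *m (burau_Fbasis N.+1 q1 q2 *m v) = 0.
  by rewrite mulmxA hw -mulmxA gv mulmx0.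
by rewrite -(mulKmx (word_unit w h1 h2) (burau_Fbasis N.+1 q1 q2 *m v)) e mulmx0.
Qed.

Lemma wdk_Fb k : q1 != 0 ->
  @burau_word F N.+1 q1 q2 (flatten (nseq k wd)) *m burau_Fbasis N.+1 q1 q2 =
  c0 ^+ k *: burau_Fbasis N.+1 q1 q2.
Proof.
move=> h1; elim: k => [|k IH].
  by rewrite /burau_word /= mul1mx scale1r.
rewrite /= burau_word_cat -mulmxA IH -scalemxAr wd_Fb // scalerA exprS.
by rewrite mulrC.
Qed.

End Act.

Lemma prodXn (F : fieldType) (I : finType) (x : F) (e : I -> nat) :
  \prod_(i : I) x ^+ e i = x ^+ (\sum_(i : I) e i)%N.
Proof.
apply: (big_rec2 (fun y1 y2 => y1 = x ^+ y2)) => // i y1 y2 _ ->.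
by rewrite exprD.
Qed.

Lemma leq_sum_seq (T : eqType) (s : seq T) (f : T -> nat) x :
  x \in s -> (f x <= \sum_(y <- s) f y)%N.
Proof.
elim: s => // y s IH; rewrite big_cons in_cons => /orP [/eqP ->|h].
  exact: leq_addr.
by apply: leq_trans (IH h) _; apply: leq_addl.
Qed.

Section Zar.
Variable F : fieldType.
Variable K : nat.
Variable g : 'M[F]_K.

Definition ca (i : 'I_(K * K + 1)) : nat := if split i is inl _ then 1%N else 0%N.
Definition cb (i : 'I_(K * K + 1)) : nat := if split i is inr _ then 1%N else 0%N.

Lemma coordZ t : t != 0 -> forall i,
  gl_coord (t *: g) i = t ^+ ca i * ((t ^+ K)^-1) ^+ cb i * gl_coord g i.
Proof.
move=> t0 i; rewrite /gl_coord /ca /cb; case: split => [k|k] /=.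
  by rewrite (mxvec_is_scalable t g) mxE expr1 expr0 mulr1.
by rewrite detZ invfM expr0 expr1 mul1r.
Qed.


Variable p : {mpoly F[K * K + 1]}.

Definition cA (a : 'X_{1.. K * K + 1}) := (\sum_i ca i * a i)%N.
Definition cB (a : 'X_{1.. K * K + 1}) := (\sum_i cb i * a i)%N.
Definition cP (a : 'X_{1.. K * K + 1}) := \prod_i gl_coord g i ^+ a i.

Lemma evalZ t : t != 0 -> p.@[gl_coord (t *: g)] =
  \sum_(a <- msupp p) p@_a * (t ^+ cA a * ((t ^+ K)^-1) ^+ cB a * cP a).
Proof.
move=> t0; rewrite mevalE; apply: eq_bigr => a _; congr (_ * _).
under eq_bigr => i _ do rewrite coordZ // !exprMn -!exprM.
by rewrite !big_split /= !prodXn.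
Qed.

Definition Nb := (\sum_(a <- msupp p) cB a)%N.

Definition Qp : {poly F} :=
  \sum_(a <- msupp p) (p@_a * cP a) *: 'X^(cA a + K * (Nb - cB a)).

Lemma Qp_eval t : t != 0 -> Qp.[t] = t ^+ (K * Nb) * p.@[gl_coord (t *: g)].
Proof.
move=> t0; rewrite evalZ // horner_sum mulr_sumr.
apply: eq_big_seq => a ha; rewrite hornerZ hornerXn.
have hB : (cB a <= Nb)%N by apply: leq_sum_seq.
set T := t ^+ K.
have T0 : T != 0 by rewrite expf_neq0.
have e1 : T ^+ cB a * (T^-1) ^+ cB a = 1 by rewrite exprVn mulfV // expf_neq0.
have -> : t ^+ (K * Nb) = T ^+ (Nb - cB a) * T ^+ cB a by rewrite -exprD subnK // exprM.
rewrite exprD exprM -/T.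
transitivity ((T ^+ cB a * T^-1 ^+ cB a) * (p@_a * cP a * (t ^+ cA a * T ^+ (Nb - cB a)))).
  by rewrite e1 mul1r.
move: (T ^+ cB a) (T^-1 ^+ cB a) (p@_a) (cP a) (t ^+ cA a) (T ^+ (Nb - cB a)).
by move=> x1 x2 x3 x4 x5 x6; ring.
Qed.

End Zar.

Lemma pow_inj (F : fieldType) (c : F) :
  c != 0 -> (forall k : nat, (0 < k)%N -> c ^+ k != 1) ->
  injective (fun k : nat => c ^+ k).
Proof.
move=> c0 hc.
have H : forall i j, (i < j)%N -> c ^+ i = c ^+ j -> False.
  move=> i j ij e.
  have : c ^+ i * (c ^+ (j - i) - 1) = 0.
    by rewrite mulrBr mulr1 -exprD subnKC ?(ltnW ij) // e subrr.
  move/eqP; rewrite mulf_eq0 expf_eq0 (negbTE c0) andbF /= subr_eq0 => /eqP h.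
  by move: (hc (j - i)%N); rewrite subn_gt0 ij h eqxx => /(_ isT).
move=> i j /= e; case: (ltngtP i j) => // h.
  by case: (H _ _ h e).
by case: (H _ _ h (esym e)).
Qed.

Lemma zariski_scal (F : fieldType) (K : nat) (S : 'M[F]_K -> Prop) (g : 'M_K) (c : F) :
  c != 0 -> (forall k : nat, (0 < k)%N -> c ^+ k != 1) -> g \in unitmx ->
  (forall k, S (c ^+ k *: g)) -> forall z, z != 0 ->
  forall p : {mpoly F[K * K + 1]},
  (forall h, S h -> h \in unitmx -> p.@[gl_coord h] = 0) ->
  p.@[gl_coord (z *: g)] = 0.
Proof.
move=> c0 hc gU HS z z0 p hp.
have ck0 : forall k, c ^+ k != 0 by move=> k; rewrite expf_neq0.
have root_k : forall k, (Qp g p).[c ^+ k] = 0.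
  move=> k; rewrite Qp_eval // hp ?mulr0 //.
  by rewrite unitmxZ // unitfE.
have Q0 : Qp g p = 0.
  apply/eqP; apply/negPn/negP => nz.
  set rs := [seq c ^+ k | k <- iota 0 (size (Qp g p))].
  have ar : all (root (Qp g p)) rs.
    by apply/allP => x /mapP [k _ ->]; apply/eqP/root_k.
  have ur : uniq rs.
    rewrite map_inj_in_uniq ?iota_uniq //.
    by move=> i j _ _; apply: pow_inj.
  by have := max_poly_roots nz ar ur; rewrite size_map size_iota ltnn.
have := Qp_eval g p z0; rewrite Q0 horner0 => /esym/eqP.
by rewrite mulf_eq0 expf_eq0 (negbTE z0) andbF /= => /eqP.
Qed.

Theorem lemmaA2 (R : realType) (n : nat) (q1 q2 : R[i]) :
  (2 <= n)%N ->
  q1 * q2 != 0 ->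
  not_root_of_unity (- q2 / q1) ->
  not_root_of_unity (q1 ^+ (n - 2) * q2) ->
  forall g : 'M[R[i]]_n.-1,
    reduced_burau_image n q1 q2 g ->
    forall z : R[i], z != 0 ->
      zariski_closure_GL (reduced_burau_image n q1 q2) (z *: g).
Proof.
move=> hn hq nr1 nr2 g [w hw] z z0.
case: n hn g w hw nr2 => [|[|M]] // _ g w hw nr2.
have h1 : q1 != 0 by move: hq; rewrite mulf_eq0 negb_or => /andP [].
have h2 : q2 != 0 by move: hq; rewrite mulf_eq0 negb_or => /andP [].
have gU : g \in unitmx := img_unit h1 h2 hw.
split; first by rewrite unitmxZ ?unitfE.
have ex : q1 ^+ M.+1 * q q1 q2 = - (q1 ^+ M * q2).
  by rewrite /q exprS -mulrA mulrCA [q1 * _]mulrCA mulfV // mulr1 mulrN.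
have hq0 : q q1 q2 != 0 by rewrite /q mulf_neq0 ?oppr_eq0 ?invr_eq0.
apply: (@zariski_scal _ M.+1 (reduced_burau_image M.+2 q1 q2) g (c0 q1 q2 M.+1)) => //.
- by rewrite /c0 expf_neq0 // mulf_neq0 // expf_neq0.
- move=> k k0; apply/negP => /eqP e.
  have hk : (0 < 2 * (M.+2 * k))%N by rewrite !muln_gt0 k0.
  have := nr2 _ hk.
  rewrite (_ : (M.+2 - 2 = M)%N); last by lia.
  move/negP; apply; apply/eqP.
  rewrite exprM -sqrrN -exprM mulnC exprM exprM -ex.
  have -> : (q1 ^+ M.+1 * q q1 q2) ^+ M.+2 ^+ k = 1 by move: e; rewrite /c0.
  by rewrite expr1n.
- move=> k; exists (flatten (nseq k (wd M.+1)) ++ w).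
  rewrite burau_word_cat -mulmxA hw mulmxA wdk_Fb //.
  by rewrite -scalemxAl scalemxAr.
Qed.
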